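(* Let $n\ge 4$ and $1\le k<\frac{n}{2}$ be integers, let $P_1=\{v\subset[n]:|v|=k\}$ and $P_2=\{w\subset [n]:|w|=k+1\}$, and let $f$ be an automorphism of $B(n,k)$. If $n\ne 2k+1$, then $f(P_1)=P_1$ and $f(P_2)=P_2$. If $n=2k+1$, then either $f(P_1)=P_1$ and $f(P_2)=P_2$, or $f(P_1)=P_2$ and $f(P_2)=P_1$.
   Context: For integers $n\ge 4$ and $1\le k<\frac n2$, let $[n]=\{1,\dots,n\}$. The graph $B(n,k)$ has vertex set $V=\{v\subset[n] : |v|\in\{k,k+1\}\}$, and two vertices $v,w$ are adjacent iff $v\subset w$ or $w\subset v$. *)

(* Defs.v *)
From mathcomp Require Import all_boot.
Set Implicit Arguments. Unset Strict Implicit. Unset Printing Implicit Defensive.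

Definition is_Bvertex (n k : nat) (v : {set 'I_n}) : bool :=
  (#|v| == k) || (#|v| == k.+1).

Definition Bvert (n k : nat) := {v : {set 'I_n} | is_Bvertex k v}.

Definition Badj (n k : nat) (v w : Bvert n k) : bool :=
  (v != w) && ((val v \subset val w) || (val w \subset val v)).

Definition is_Baut (n k : nat) (f : Bvert n k -> Bvert n k) : Prop :=
  bijective f /\ forall v w, Badj v w = Badj (f v) (f w).

Definition P1 (n k : nat) : {set Bvert n k} := [set v : Bvert n k | #|val v| == k].
Definition P2 (n k : nat) : {set Bvert n k} := [set v : Bvert n k | #|val v| == k.+1].

(* Main.v *)
Require Import Defs.
From mathcomp Require Import all_boot.
From mathcomp Require Import zify.
Set Implicit Arguments. Unset Strict Implicit.

Section S.
Variables (n k : nat).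

Definition sB (v : Bvert n k) : bool := #|val v| == k.

Lemma sizeB (v : Bvert n k) : (#|val v| = k) \/ (#|val v| = k.+1).
Proof. by case: v => A /= /orP [/eqP -> | /eqP ->]; [left|right]. Qed.

Lemma sub_card_eq (A B : {set 'I_n}) : A \subset B -> #|A| = #|B| -> A = B.
Proof. by move=> S E; apply/eqP; rewrite eqEcard S E leqnn. Qed.

Lemma adj_s (v w : Bvert n k) : Badj v w -> sB v = ~~ sB w.
Proof.
rewrite /Badj /sB => /andP [neq sub].
have H : #|val v| != #|val w|.
  apply/negP => /eqP E; move/negP: neq; apply; apply/eqP/val_inj.
  case/orP: sub => S; [exact: sub_card_eq | symmetry; exact: sub_card_eq].
move: H; case: (sizeB v) => ->; case: (sizeB w) => ->; lia.
Qed.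

Lemma adj_mk (A B : {set 'I_n}) (HA : is_Bvertex k A) (HB : is_Bvertex k B) :
  A \subset B -> A != B -> Badj (exist _ A HA : Bvert n k) (exist _ B HB).
Proof.
move=> S N; rewrite /Badj /= S orTb andbT.
apply/negP => /eqP E; move/negP: N; apply; apply/eqP.
by have := f_equal val E.
Qed.

Variable f : Bvert n k -> Bvert n k.
Hypothesis Hf : is_Baut f.

Definition g (v : Bvert n k) := sB (f v) == sB v.

Lemma g_adj v w : Badj v w -> g v = g w.
Proof.
move=> A; have A' : Badj (f v) (f w) by rewrite -Hf.2.
rewrite /g (adj_s A) (adj_s A'); by case: (sB w); case: (sB (f w)).
Qed.

Lemma g_k (m : nat) : forall (a b : Bvert n k), #|val a| = k -> #|val b| = k ->
  #|val a :\: val b| = m -> g a = g b.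
Proof.
elim: m => [|m IH] a b Ha Hb Hm.
  have : val a \subset val b by rewrite -setD_eq0 -cards_eq0 Hm.
  move=> S; have := sub_card_eq S; rewrite Ha Hb => /(_ erefl) E.
  by rewrite (val_inj E).
case: a Ha Hm => [A HAv] /= Ha Hm; case: b Hb Hm => [B HBv] /= Hb Hm.
have : 0 < #|A :\: B| by rewrite Hm.
rewrite card_gt0 => /set0Pn [x]; rewrite inE => /andP [xB xA].
have cBA : #|B :\: A| = m.+1.
  have e1 := cardsID B A; have e2 := cardsID A B.
  rewrite setIC in e2; by apply/eqP; rewrite -(eqn_add2l #|A :&: B|) e2 -Hm e1 Ha Hb.
have : 0 < #|B :\: A| by rewrite cBA.
rewrite card_gt0 => /set0Pn [y]; rewrite inE => /andP [yA yB].
have xy : x != y by apply/eqP => E; rewrite E yB in xB.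
set C := y |: (A :\ x).
set W := y |: A.
have cC : #|C| = k.
  have e := cardsD1 x A; rewrite xA /= in e.
  rewrite cardsU1 in_setD1 (negPf yA) andbF /=; lia.
have cW : #|W| = k.+1 by rewrite cardsU1 yA /= Ha.
have HC : is_Bvertex k C by rewrite /is_Bvertex cC eqxx.
have HW : is_Bvertex k W by rewrite /is_Bvertex cW eqxx orbT.
pose c : Bvert n k := exist _ C HC.
pose w : Bvert n k := exist _ W HW.
have aw : Badj (exist _ A HAv : Bvert n k) w.
  apply: adj_mk; first by apply: subsetUr.
  by apply/negP => /eqP E; move: cW; rewrite -E Ha; lia.
have cw : Badj c w.
  apply: adj_mk; first by apply: setUS; apply: subD1set.
  by apply/negP => /eqP E; move: cC; rewrite E cW; lia.
rewrite (g_adj aw) -(g_adj cw); apply: IH => //=.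
have -> : C :\: B = (A :\: B) :\ x.
  apply/setP => z; rewrite !inE.
  case: (z =P y) => [->|]; first by rewrite yB /= andbF.
  by move=> _ /=; case: (z == x); case: (z \in B); case: (z \in A).
by rewrite (cardsD1 x (A :\: B)) inE xB xA /= in Hm; lia.
Qed.

Lemma g_k1 (w : Bvert n k) : #|val w| = k.+1 -> exists a : Bvert n k, #|val a| = k /\ g w = g a.
Proof.
case: w => W HWv /= Hw; have : 0 < #|W| by rewrite Hw.
rewrite card_gt0 => /set0Pn [x xW].
have cA : #|W :\ x| = k by move: Hw; rewrite (cardsD1 x W) xW add1n => [[]].
have HA : is_Bvertex k (W :\ x) by rewrite /is_Bvertex cA eqxx.
exists (exist (fun v => is_Bvertex k v) _ HA); split => //.
symmetry; apply: g_adj.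
apply: adj_mk; first exact: subD1set.
by apply/negP => /eqP E; move: cA; rewrite E Hw; lia.
Qed.

Lemma g_const (v w : Bvert n k) : g v = g w.
Proof.
have red : forall u : Bvert n k, exists a : Bvert n k, #|val a| = k /\ g u = g a.
  move=> u; case: (sizeB u) => H; first by exists u.
  exact: g_k1.
have [a [Ha ->]] := red v; have [b [Hb ->]] := red w.
exact: (g_k Ha Hb erefl).
Qed.

Lemma inP1 v : (v \in P1 n k) = sB v.
Proof. by rewrite inE. Qed.
Lemma inP2 v : (v \in P2 n k) = ~~ sB v.
Proof. rewrite inE /sB; case: (sizeB v) => ->; lia. Qed.

Lemma f_inj : injective f.
Proof. by case: Hf => /bij_inj. Qed.

Lemma f_surj v : exists u, v = f u.
Proof. case: Hf => [[h _ hK]] _; by exists (h v). Qed.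

End S.

Lemma cardP1 n k : #|P1 n k| = 'C(n, k).
Proof.
have E : [set val x | x in P1 n k] = [set A : {set 'I_n} | #|A| == k].
  apply/setP => A; rewrite inE; apply/imsetP/idP.
    by case=> v; rewrite inE => /eqP H ->; apply/eqP.
  move=> H; have HA : is_Bvertex k A by rewrite /is_Bvertex H.
  by exists (exist _ A HA) => //; rewrite inE.
by rewrite -(card_imset _ val_inj) E card_draws card_ord.
Qed.

Lemma cardP2 n k : #|P2 n k| = 'C(n, k.+1).
Proof.
have E : [set val x | x in P2 n k] = [set A : {set 'I_n} | #|A| == k.+1].
  apply/setP => A; rewrite inE; apply/imsetP/idP.
    by case=> v; rewrite inE => /eqP H ->; apply/eqP.
  move=> H; have HA : is_Bvertex k A by rewrite /is_Bvertex H orbT.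
  by exists (exist _ A HA) => //; rewrite inE.
by rewrite -(card_imset _ val_inj) E card_draws card_ord.
Qed.

Theorem corollary3p9 (n k : nat) (f : Bvert n k -> Bvert n k) :
  4 <= n -> 1 <= k -> k.*2 < n -> is_Baut f ->
  (n != k.*2.+1 -> f @: P1 n k = P1 n k /\ f @: P2 n k = P2 n k) /\
  (n = k.*2.+1 ->
     (f @: P1 n k = P1 n k /\ f @: P2 n k = P2 n k) \/
     (f @: P1 n k = P2 n k /\ f @: P2 n k = P1 n k)).
Proof.
move=> n4 k1 kn Hf.
have fi := f_inj Hf.
have memf : forall (P : {set Bvert n k}) v, (f v \in f @: P) = (v \in P).
  by move=> P v; rewrite mem_imset.
have cases : (f @: P1 n k = P1 n k /\ f @: P2 n k = P2 n k) \/
     (f @: P1 n k = P2 n k /\ f @: P2 n k = P1 n k).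
  case: (boolP [forall u, g f u]) => [/forallP Hall | /forallP Hn].
    left; split; apply/setP => v; have [u ->] := f_surj Hf v;
      rewrite memf ?inP1 ?inP2; have := Hall u; rewrite /g => /eqP ->//.
  have [u0 Hu0] : exists u0, ~~ g f u0.
    by apply/existsP; rewrite -negb_forall; apply/forallP.
  have Hall : forall u, ~~ g f u by move=> u; rewrite (g_const Hf u u0).
  right; split; apply/setP => v; have [u ->] := f_surj Hf v;
    rewrite memf ?inP1 ?inP2; have := Hall u; rewrite /g;
    by case: (sB (f u)); case: (sB u).
split=> // Hn; case: cases => // [[E1 _]].
exfalso; move/negP: Hn; apply.
have := card_imset (P1 n k) fi; rewrite E1 cardP1 cardP2 => E.
have e1 := mul_bin_diag n k; have e2 := mul_bin_down n k.
rewrite e1 E in e2.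
have : 0 < 'C(n, k) by rewrite bin_gt0; lia.
move: e2; set c := 'C(n, k) => e2 cpos.
have : k.+1 = n - k by apply/eqP; rewrite -(eqn_pmul2r cpos) e2.
by move=> H; apply/eqP; lia.
Qed.
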